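(* Let $q$ be a prime power and $\mathcal{C}\subseteq(\mathbb{C}^q)^{\otimes n}$ a stabilizer code with stabilizer group $S\subseteq\mathcal{P}_q^n$. Assume that for every $i\in[n]$ there exist stabilizers $P=X^\alpha Z^\beta\in S$ and $Q=X^\gamma Z^\delta\in S$ ($\alpha,\beta,\gamma,\delta\in\mathbb{F}_q^n$) with $|\mathrm{supp}(P)\cup\mathrm{supp}(Q)|\leq r$, $(\alpha_i,\beta_i)=(1,0)$ and $(\gamma_i,\delta_i)=(0,1)$. Then $\mathcal{C}$ is a quantum locally recoverable code with locality $r$.
   Context: Let $\mathbb{F}_q$ have characteristic $p$. For $a\in\mathbb{F}_q$, single-qudit Paulis on $\mathbb{C}^{\mathbb{F}_q}$: $X^a|x\rangle=|x+a\rangle$, $Z^a|x\rangle=e^{(2\pi i/p)\mathrm{tr}_{\mathbb{F}_q/\mathbb{F}_p}(ax)}|x\rangle$. For $\alpha,\beta\in\mathbb{F}_q^n$, $X^\alpha Z^\beta=\bigotimes_{j}X^{\alpha_j}Z^{\beta_j}$; $\mathcal{P}_q^n$ is the group of such operators modulo global phase (identified with $\mathbb{F}_q^{2n}$), and $\mathrm{supp}(X^\alpha Z^\beta)=\{j:(\alpha_j,\beta_j)\neq(0,0)\}$. A stabilizer code is the simultaneous $+1$-eigenspace of an abelian (all elements commuting, including phases) subgroup $S$ of $\mathcal{P}_q^n$ that is an $\mathbb{F}_q$-subspace; $S$ is its stabilizer group. A quantum code on qudits $[n]$ is locally recoverable with locality $r$ if for each $i\in[n]$ there is $I_i\subseteq[n]$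 with $i\in I_i$, $|I_i|\le r$, and a quantum channel $\mathrm{Rec}_i$ from qudits $I_i\setminus\{i\}$ to qudits $I_i$ with $(\mathrm{Rec}_i\otimes\mathrm{id}_{[n]\setminus I_i})(\psi_{[n]\setminus\{i\}})=\psi$ for every code state $\psi$, where $\psi_B$ denotes the reduced density matrix on $B$. *)

(* Defs.v *)
From HB Require Import structures.
From mathcomp Require Import all_boot all_order all_algebra all_field.
Set Implicit Arguments. Unset Strict Implicit. Unset Printing Implicit Defensive.
Import Order.TTheory GRing.Theory Num.Theory.
Local Open Scope ring_scope.

(* Qudits over a finite field F (q = #|F|), n qudits labelled by 'I_n.
   Amplitudes live in an arbitrary numeric algebraically closed field C
   (e.g. the complex numbers), w is a primitive p-th root of unity
   (p = char F), playing the role of e^{2 pi i / p}. *)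
Section Qudits.
Variables (F : finFieldType) (C : numClosedFieldType) (p : nat) (w : C) (n : nat).

Notation cfgF := {ffun 'I_n -> F}.

Definition supp_in (B : {set 'I_n}) (x : cfgF) : bool :=
  [forall j, (j \notin B) ==> (x j == 0)].

(* basis of the Hilbert space of the qudits in B: configurations on B
   (encoded as elements of F^n vanishing outside B) *)
Notation cfg B := {x : cfgF | supp_in B x}.

Definition trunc (B : {set 'I_n}) (f : cfgF) : cfgF :=
  [ffun j => if j \in B then f j else 0].

Lemma trunc_supp B f : supp_in B (trunc B f).
Proof. by apply/forallP => j; apply/implyP => h; rewrite ffunE (negbTE h). Qed.

Definition mk (B : {set 'I_n}) (f : cfgF) : cfg B := exist _ (trunc B f) (trunc_supp B f).

Definition glue (B : {set 'I_n}) (y z : cfgF) : cfgF :=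
  [ffun j => if j \in B then y j else z j].

Definition op (B : {set 'I_n}) := cfg B -> cfg B -> C.
Definition vec (B : {set 'I_n}) := cfg B -> C.

Definition mulop B (M N : op B) : op B := fun x y => \sum_(z : cfg B) M x z * N z y.
Definition applyop B (M : op B) (v : vec B) : vec B := fun x => \sum_(z : cfg B) M x z * v z.

Definition Emat B (y y' : cfg B) : op B := fun u v => ((u == y) && (v == y'))%:R.

Definition ptr (A B : {set 'I_n}) (rho : op A) : op B :=
  fun x x' => \sum_(z : cfg (~: B))
    rho (mk A (glue B (val x) (val z))) (mk A (glue B (val x') (val z))).

(* (Phi \otimes id_D)(rho) for Phi : op B1 -> op B2, rho on A = B1 u D,
   result on A' = B2 u D (D = A \ B1 = A' \ B2), defined on matrix units *)
Definition ext_id (B1 B2 A A' : {set 'I_n}) (Phi : op B1 -> op B2) (rho : op A) : op A' :=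
  fun x x' => \sum_(y : cfg B1) \sum_(y' : cfg B1)
    Phi (Emat y y') (mk B2 (val x)) (mk B2 (val x')) *
    rho (mk A (glue B1 (val y) (val x))) (mk A (glue B1 (val y') (val x'))).



Arguments ext_id : clear implicits.
Arguments ptr : clear implicits.

Definition channel (B1 B2 : {set 'I_n}) (Phi : op B1 -> op B2) : Prop :=
  exists K : seq (cfg B2 -> cfg B1 -> C),
    (forall rho x x', Phi rho x x' =
       \sum_(k <- K) \sum_(u : cfg B1) \sum_(v : cfg B1) k x u * rho u v * (k x' v)^*)
    /\ (forall u v : cfg B1,
       \sum_(k <- K) \sum_(x : cfg B2) (k x u)^* * k x v = (u == v)%:R).

(* field trace tr_{F/F_p}, and its value as an integer in [0, p) *)
Definition trF (x : F) : F := \sum_(k < logn p #|F|) x ^+ (p ^ k).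
Definition trnat (x : F) : nat := odflt 0%N (omap val [pick k : 'I_p | (k%:R : F) == trF x]).

(* Pauli operator X^alpha Z^beta on all n qudits:
   X^a Z^b |x> = w^{tr(b x)} |x + a> (tensor product over qudits) *)
Definition pauli (P : cfgF * cfgF) : op setT :=
  fun y x => if val y == [ffun j => val x j + P.1 j]
             then \prod_(j < n) w ^+ trnat (P.2 j * val x j) else 0.

Definition psupp (P : cfgF * cfgF) : {set 'I_n} :=
  [set j | (P.1 j != 0) || (P.2 j != 0)].

Definition stabilizer_group (S : {set cfgF * cfgF}) : Prop :=
  [/\ ([ffun => 0], [ffun => 0]) \in S,
      (forall P Q, P \in S -> Q \in S ->
         ([ffun j => P.1 j + Q.1 j], [ffun j => P.2 j + Q.2 j]) \in S),
      (forall (c : F) P, P \in S -> ([ffun j => c * P.1 j], [ffun j => c * P.2 j]) \in S)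
    & (forall P Q, P \in S -> Q \in S -> mulop (pauli P) (pauli Q) = mulop (pauli Q) (pauli P))].

Definition in_code (S : {set cfgF * cfgF}) (v : vec setT) : Prop :=
  forall P, P \in S -> applyop (pauli P) v = v.

Definition code_state (S : {set cfgF * cfgF}) (rho : op setT) : Prop :=
  [/\ (forall x y, rho y x = (rho x y)^*),
      (forall v : vec setT, 0 <= \sum_x \sum_y (v x)^* * rho x y * v y),
      \sum_x rho x x = 1
    & (forall u : vec setT, in_code S (applyop rho u))].

Definition locally_recoverable (S : {set cfgF * cfgF}) (r : nat) : Prop :=
  forall i : 'I_n, exists I : {set 'I_n},
    [/\ i \in I, (#|I| <= r)%N &
      exists Phi : op (I :\ i) -> op I, channel Phi /\
        forall rho, code_state S rho ->
          ext_id (I :\ i) I [set~ i] setT Phi (ptr setT [set~ i] rho) = rho].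

End Qudits.

(* Main.v *)
Require Import Defs.
From HB Require Import structures.
From mathcomp Require Import all_boot all_order all_algebra all_field.
From mathcomp Require Import ring zify.
From Stdlib Require Import FunctionalExtensionality.
Import GRing.Theory Num.Theory.
Local Open Scope ring_scope.
Set Implicit Arguments. Unset Strict Implicit. Unset Printing Implicit Defensive.

Section Chi.
Variables (F : finFieldType) (C : numClosedFieldType) (p : nat) (w : C).
Hypothesis chp : p \in [pchar F].
Hypothesis wp : p.-primitive_root w.

Lemma p_prime : prime p. Proof. exact: pcharf_prime chp. Qed.
Lemma p_gt1 : (1 < p)%N. Proof. exact: prime_gt1 p_prime. Qed.

Lemma cardF : #|F| = (p ^ logn p #|F|)%N.
Proof. exact: (card_pprimeChar chp). Qed.

Lemma natF_eq a b : ((a%:R : F) == b%:R) = (a == b %[mod p]).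
Proof.
wlog ab : a b / (a <= b)%N.
  move=> H; case: (leqP a b) => [/H //|/ltnW ba].
  by rewrite eq_sym H // eq_sym.
by rewrite [RHS]eq_sym eqn_mod_dvd // (dvdn_pcharf chp) natrB // subr_eq0 eq_sym.
Qed.

Lemma expp_add k (x y : F) : (x + y) ^+ (p ^ k) = x ^+ (p ^ k) + y ^+ (p ^ k).
Proof.
elim: k => [|k IH]; first by rewrite !expn0 !expr1.
rewrite expnSr !exprM IH.
by rewrite -!(pFrobenius_autE chp) rmorphD.
Qed.

Lemma trFD (x y : F) : trF p (x + y) = trF p x + trF p y.
Proof. by rewrite /trF -big_split; apply: eq_bigr => k _; rewrite expp_add. Qed.

Lemma trF0 : trF p (0 : F) = 0.
Proof. by rewrite /trF big1 // => k _; rewrite expr0n expn_eq0 (gtn_eqF (prime_gt0 p_prime)). Qed.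

Lemma trF_fix (x : F) : trF p x ^+ p = trF p x.
Proof.
rewrite /trF -(pFrobenius_autE chp) rmorph_sum /=.
have -> : \sum_(k < logn p #|F|) pFrobenius_aut chp (x ^+ (p ^ k))
        = \sum_(k < logn p #|F|) x ^+ (p ^ k.+1).
  by apply: eq_bigr => k _; rewrite pFrobenius_autE -exprM expnSr.
have h := big_ord_recl (logn p #|F|) (fun k : 'I_(logn p #|F|).+1 => x ^+ (p ^ k)).
have h2 := big_ord_recr (logn p #|F|) (fun k : 'I_(logn p #|F|).+1 => x ^+ (p ^ k)).
rewrite /= in h h2.
have : x ^+ (p ^ 0) + \sum_(k < logn p #|F|) x ^+ (p ^ k.+1) =
       \sum_(k < logn p #|F|) x ^+ (p ^ k) + x ^+ (p ^ logn p #|F|).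
  by rewrite -h -h2.
rewrite -cardF expf_card expn0 expr1 addrC => /addIr.
by [].
Qed.

Lemma fix_nat (y : F) : y ^+ p = y -> exists2 k, (k < p)%N & k%:R = y.
Proof.
move=> hy.
case: (boolP (y \in [seq (k%:R : F) | k <- iota 0 p])) => [/mapP [k] | ny].
  by rewrite mem_iota add0n => /andP[_ kp] ->; exists k.
exfalso.
pose pol : {poly F} := 'X^p - 'X.
have pol_size : size pol = p.+1.
  by rewrite /pol size_polyDl ?size_polyXn // size_polyN size_polyX ltnS; exact p_gt1.
have nz : pol != 0 by rewrite -size_poly_eq0 pol_size.
have hr : all (root pol) (y :: [seq (k%:R : F) | k <- iota 0 p]).
  rewrite /= /root /pol !hornerE hy subrr eqxx /=.
  apply/allP => z /mapP[k _ ->].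
  by rewrite /root !hornerE -(pFrobenius_autE chp) pFrobenius_aut_nat subrr.
have hu : uniq (y :: [seq (k%:R : F) | k <- iota 0 p]).
  rewrite /= ny /= map_inj_in_uniq ?iota_uniq // => a b.
  rewrite !mem_iota !add0n => /andP[_ ha] /andP[_ hb] /eqP.
  by rewrite natF_eq !modn_small // => /eqP.
have := max_poly_roots nz hr hu.
by rewrite /= size_map size_iota pol_size ltnn.
Qed.

Lemma trnatP (x : F) : (trnat p x < p)%N /\ (trnat p x)%:R = trF p x.
Proof.
rewrite /trnat; case: pickP => [k /eqP hk | none] /=; first by split.
have [k kp hk] := fix_nat (trF_fix x).
by have := none (Ordinal kp); rewrite /= hk eqxx.
Qed.

Definition chi (a : F) := w ^+ trnat p a.

Lemma chi_nat (a : F) k : (k%:R : F) = trF p a -> chi a = w ^+ k.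
Proof.
move=> hk; apply/eqP; rewrite /chi (eq_prim_root_expr wp) -natF_eq.
by case: (trnatP a) => _ ->; rewrite hk.
Qed.

Lemma chiD a b : chi (a + b) = chi a * chi b.
Proof.
rewrite /chi -exprD; apply: chi_nat.
by rewrite natrD trFD; case: (trnatP a) => _ ->; case: (trnatP b) => _ ->.
Qed.

Lemma chi0 : chi 0 = 1.
Proof. by rewrite (@chi_nat 0 0) ?trF0. Qed.

Lemma chiN a : chi (- a) * chi a = 1.
Proof. by rewrite -chiD addNr chi0. Qed.

Lemma normw : `|w| = 1.
Proof.
apply/eqP; rewrite -(@pexpr_eq1 _ _ p) ?prime_gt0 ?p_prime //.
by rewrite -normrX (prim_expr_order wp) normr1.
Qed.

Lemma chiC a : (chi a)^* * chi a = 1.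
Proof.
by rewrite mulrC -normCK /chi normrX normw !expr1n.
Qed.

Lemma chiCN a : (chi a)^* = chi (- a).
Proof.
have nz : chi a != 0 by rewrite /chi expf_neq0 // -normr_eq0 normw oner_eq0.
by apply: (mulIf nz); rewrite chiC chiN.
Qed.


Lemma trF_nz : exists t : F, trF p t != 0.
Proof.
case: (boolP [exists t : F, trF p t != 0]) => [/existsP [t ht] | /existsPn all0]; first by exists t.
exfalso.
set m := logn p #|F|.
have m_gt0 : (0 < m)%N.
  have := finNzRing_gt1 F; rewrite {1}cardF -/m.
  by case: m => //; rewrite expn0.
pose T : {poly F} := \sum_(k < m) 'X^(p ^ k).
have hm : (m.-1 < m)%N by rewrite ltn_predL.
have Tcoef : T`_(p ^ m.-1) = 1.
  rewrite /T coef_sum (bigD1 (Ordinal hm)) //= coefXn eqxx big1 ?addr0 // => k hk.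
  rewrite coefXn eqn_exp2l ?p_gt1 //.
  case: eqP => // e; move: hk; rewrite -val_eqE /= -e eqxx //.
have Tnz : T != 0.
  by apply/eqP => h; move: Tcoef; rewrite h coef0 => /eqP; rewrite eq_sym oner_eq0.
have Tsize : (size T <= (p ^ m.-1).+1)%N.
  apply: leq_trans (size_sum _ _ _) _; apply/bigmax_leqP => k _.
  rewrite size_polyXn ltnS leq_exp2l ?p_gt1 //.
  by have := ltn_ord k; lia.
have hr : all (root T) (enum F).
  apply/allP => t _; have /negPn/eqP h0 := all0 t.
  rewrite /root /T horner_sum; apply/eqP; rewrite -[RHS]h0 /trF; apply: eq_bigr => k _.
  exact: hornerXn.
have := max_poly_roots Tnz hr (enum_uniq F).
rewrite -cardE => h; have := leq_trans h Tsize.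
by rewrite {1}cardF -/m ltnS leqNgt ltn_exp2l ?p_gt1 // hm.
Qed.

Lemma sum_chi (a : F) : \sum_(d : F) chi (d * a) = (a == 0)%:R * #|F|%:R.
Proof.
have [-> | anz] := eqVneq a 0.
  under eq_bigr do rewrite mulr0 chi0.
  by rewrite sumr_const mul1r.
have [t ht] := trF_nz.
pose d0 := t / a.
have hc : chi (d0 * a) != 1.
  rewrite /d0 divfK //; have [tp tv] := trnatP t; rewrite /chi.
  apply/negP => /eqP h.
  have := eq_prim_root_expr wp (trnat p t) 0.
  rewrite expr0 h eqxx modn_small // mod0n => /esym/eqP t0.
  by move: ht; rewrite -tv t0 eqxx.
have h : \sum_(d : F) chi (d * a) = (\sum_(d : F) chi (d * a)) * chi (d0 * a).
  rewrite mulr_suml (reindex_inj (addIr d0)) /=.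
  by apply: eq_bigr => d _; rewrite mulrDl chiD.
have : (\sum_(d : F) chi (d * a)) * (1 - chi (d0 * a)) = 0.
  by rewrite mulrBr mulr1 -h subrr.
move/eqP; rewrite mulf_eq0 subr_eq0 [1 == _]eq_sym (negbTE hc) orbF => /eqP ->.
by rewrite mul0r.
Qed.

End Chi.

Lemma sum_pick (C : numClosedFieldType) (T : finType) (y0 : T) (b : pred T) (f : T -> C) :
  (forall y, b y = (y == y0)) -> \sum_y (b y)%:R * f y = f y0.
Proof.
move=> hb; rewrite (bigD1 y0) //= hb eqxx mul1r big1 ?addr0 // => y hy.
by rewrite hb (negbTE hy) mul0r.
Qed.

Lemma sum_pick2 (C : numClosedFieldType) (T : finType) (y0 : T) (cc : bool) (b : pred T) (f : T -> C) :
  (forall y, b y = cc && (y == y0)) -> \sum_y (b y)%:R * f y = cc%:R * f y0.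
Proof.
case: cc => hb; first by rewrite mul1r; apply: sum_pick => y; rewrite hb.
by rewrite mul0r big1 // => y _; rewrite hb mul0r.
Qed.

Lemma conjM' (C : numClosedFieldType) (x y : C) : (x * y)^* = x^* * y^*.
Proof. exact: rmorphM. Qed.

Lemma rearr (C : numClosedFieldType) (k X f1 Y f2 : C) :
  k * (X * f1) * (k * (Y * f2)) = X * (k * k * (Y * (f1 * f2))).
Proof. ring. Qed.

Lemma sum_pickr (C : numClosedFieldType) (T : finType) (y0 : T) (b : pred T) (f : T -> C) :
  (forall y, b y = (y == y0)) -> \sum_y f y * (b y)%:R = f y0.
Proof. by move=> hb; rewrite -(sum_pick f hb); apply: eq_bigr => y _; rewrite mulrC. Qed.

Lemma reorg (C : numClosedFieldType) (T1 T2 T3 T4 : finType) (q : C) (A : T3 -> T1 -> C)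
  (B : T3 -> T2 -> C) (R : T1 -> T2 -> T4 -> C) :
  \sum_(y : T1) \sum_(y' : T2) (q * \sum_(e : T3) A e y * B e y') * \sum_(z : T4) R y y' z
  = \sum_(z : T4) \sum_(e : T3) q * \sum_(y : T1) A e y * \sum_(y' : T2) B e y' * R y y' z.
Proof.
transitivity (\sum_(y : T1) \sum_(y' : T2) \sum_(e : T3) \sum_(z : T4) q * (A e y * (B e y' * R y y' z))).
  apply: eq_bigr => y _; apply: eq_bigr => y' _.
  rewrite mulr_sumr mulr_suml; apply: eq_bigr => e _.
  rewrite !mulr_sumr; apply: eq_bigr => z _; by rewrite !mulrA.
transitivity (\sum_(z : T4) \sum_(e : T3) \sum_(y : T1) \sum_(y' : T2) q * (A e y * (B e y' * R y y' z))).
  transitivity (\sum_(y : T1) \sum_(e : T3) \sum_(y' : T2) \sum_(z : T4) q * (A e y * (B e y' * R y y' z))).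
    by apply: eq_bigr => y _; rewrite exchange_big.
  rewrite exchange_big.
  transitivity (\sum_(e : T3) \sum_(y : T1) \sum_(z : T4) \sum_(y' : T2) q * (A e y * (B e y' * R y y' z))).
    by apply: eq_bigr => e _; apply: eq_bigr => y _; rewrite exchange_big.
  transitivity (\sum_(e : T3) \sum_(z : T4) \sum_(y : T1) \sum_(y' : T2) q * (A e y * (B e y' * R y y' z))).
    by apply: eq_bigr => e _; rewrite exchange_big.
  by rewrite exchange_big.
apply: eq_bigr => z _; apply: eq_bigr => e _.
rewrite mulr_sumr; apply: eq_bigr => y _; rewrite !mulr_sumr; apply: eq_bigr => y' _.
by [].
Qed.

Lemma conjV' (C : numClosedFieldType) (x : C) : (x^-1)^* = (x^*)^-1.
Proof. exact: fmorphV. Qed.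

Section Main.
Variables (F : finFieldType) (C : numClosedFieldType) (p : nat) (w : C) (n : nat).
Hypothesis chp : p \in [pchar F].
Hypothesis wp : p.-primitive_root w.
Local Notation cfgF := {ffun 'I_n -> F}.
Local Notation cfg B := {x : cfgF | supp_in B x}.
Local Notation chi := (chi p w).

Definition ph (M : cfgF * cfgF) (x : cfgF) : C := \prod_(j < n) chi (M.2 j * x j).
Definition upd (x : cfgF) (j0 : 'I_n) (t : F) : cfgF := [ffun j => if j == j0 then t else x j].
Definition fsub (x y : cfgF) : cfgF := [ffun j => x j - y j].
Definition fadd (x y : cfgF) : cfgF := [ffun j => x j + y j].

Variables (S : {set cfgF * cfgF}) (i : 'I_n) (P Q : cfgF * cfgF).
Hypotheses (hP1 : P.1 i = 1) (hP2 : P.2 i = 0) (hQ1 : Q.1 i = 0) (hQ2 : Q.2 i = 1).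
Definition Mcd (c d : F) : cfgF * cfgF :=
  ([ffun j => c * P.1 j + d * Q.1 j], [ffun j => c * P.2 j + d * Q.2 j]).
Hypothesis hM : forall c d, Mcd c d \in S.
Local Notation I := (psupp P :|: psupp Q).

Lemma iI : i \in I.
Proof. by rewrite !inE hP1 oner_eq0. Qed.

Lemma outI j : j \notin I -> [/\ P.1 j = 0, P.2 j = 0, Q.1 j = 0 & Q.2 j = 0].
Proof.
by rewrite !inE !negb_or !negbK => /andP[/andP[/eqP a /eqP b] /andP[/eqP c /eqP d]].
Qed.

Lemma Mcd1i c d : (Mcd c d).1 i = c.
Proof. by rewrite /Mcd ffunE hP1 hQ1 mulr1 mulr0 addr0. Qed.
Lemma Mcd2i c d : (Mcd c d).2 i = d.
Proof. by rewrite /Mcd ffunE hP2 hQ2 mulr1 mulr0 add0r. Qed.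
Lemma Mcd_out c d j : j \notin I -> (Mcd c d).1 j = 0 /\ (Mcd c d).2 j = 0.
Proof. by case/outI => a b e f; rewrite /Mcd !ffunE a b e f !mulr0 addr0. Qed.

Lemma ph_supp (M : cfgF * cfgF) (X Y : cfgF) : (forall j, j \in I -> X j = Y j) -> (forall j, j \notin I -> M.2 j = 0) ->
  ph M X = ph M Y.
Proof.
move=> hXY hM2; apply: eq_bigr => j _; case: (boolP (j \in I)) => hj; first by rewrite hXY.
by rewrite hM2 // !mul0r.
Qed.

Lemma core (g : cfgF -> C)
  (hg : forall M, M \in S -> forall X, g X = ph M (fsub X M.1) * g (fsub X M.1))
  (x : cfgF) (e t : F) :
  \sum_(d : F) ph (Mcd (x i - e) d) (fsub x (Mcd (x i - e) d).1) *
      g (upd (fsub x (Mcd (x i - e) d).1) i t) = (e == t)%:R * #|F|%:R * g x.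
Proof.
set c := x i - e.
pose xt := upd x i (x i + t - e).
have step : forall d, ph (Mcd c d) (fsub x (Mcd c d).1) * g (upd (fsub x (Mcd c d).1) i t)
    = chi (d * (e - t)) * g xt.
  move=> d; set M := Mcd c d; set u := fsub x M.1; set y := upd u i t.
  have hy : y = fsub xt M.1.
    apply/ffunP => j; rewrite /y /u /xt /fsub /upd !ffunE.
    case: eqP => [->|_] //; rewrite hP1 hQ1 /c; ring.
  have hgx := hg M (hM c d) xt; rewrite -hy in hgx.
  rewrite hgx mulrA; congr (_ * _).
  rewrite /ph (bigD1 i) //= [in RHS](bigD1 i) //= mulrA; congr (_ * _).
    rewrite -chiD //; congr (chi _).
    rewrite /y /u /upd /fsub !ffunE eqxx hP1 hP2 hQ1 hQ2 /c; ring.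
  by apply: eq_bigr => j hj; rewrite /y /upd !ffunE (negbTE hj).
rewrite (eq_bigr _ (fun d _ => step d)) -mulr_suml sum_chi //.
have [et|net] := eqVneq e t.
  rewrite et subrr eqxx mul1r; congr (_ * g _).
  apply/ffunP => j; rewrite /xt /upd ffunE; case: eqP => [->|//].
  by rewrite et addrK.
by rewrite subr_eq0 (negbTE net) !mul0r.
Qed.


Definition Kr (e : F) (a : cfg I) (u : cfg (I :\ i)) : C :=
  \sum_(c : F) \sum_(d : F) ((#|F|%:R ^+ 2)^-1 *
     ((val a == fadd (upd (val u) i e) (Mcd c d).1)%:R * ph (Mcd c d) (upd (val u) i e))).

Definition Gx (x y : cfgF) (t : F) : cfgF :=
  [ffun j => if j == i then t else if j \in I then y j else x j].

Lemma supp0 B (y : cfg B) j : j \notin B -> val y j = 0.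
Proof. by move=> hj; have := valP y; rewrite /supp_in => /forallP /(_ j); rewrite hj => /eqP. Qed.

Lemma cond_col x e c d (y : cfg (I :\ i)) :
  (val (mk I x) == fadd (upd (val y) i e) (Mcd c d).1)
  = (c == x i - e) && (y == mk (I :\ i) (fsub x (Mcd c d).1)).
Proof.
apply/idP/idP.
  move/eqP => h.
  have hi := congr1 (fun f : cfgF => f i) h; rewrite /= /trunc /fadd /upd !ffunE eqxx iI in hi.
  rewrite hP1 hQ1 in hi.
  apply/andP; split; first by apply/eqP; rewrite hi; ring.
  apply/eqP/val_inj/ffunP => j /=; rewrite /trunc /fsub !ffunE.
  have hj := congr1 (fun f : cfgF => f j) h; rewrite /= /trunc /fadd /upd !ffunE in hj.
  case: (boolP (j \in I :\ i)) => hj'; last by rewrite supp0.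
  move: hj'; rewrite in_setD1 => /andP[ji jI].
  by rewrite jI (negbTE ji) in hj; rewrite hj addrK.
case/andP => /eqP hc /eqP ->; apply/eqP/ffunP => j.
rewrite /= /trunc /fadd /upd /fsub !ffunE.
have [->|ji] := eqVneq j i.
  by rewrite iI hP1 hQ1 hc; ring.
rewrite in_setD1 ji /=; case: (boolP (j \in I)) => jI; first by rewrite subrK.
by case: (Mcd_out c d jI); rewrite /Mcd !ffunE => -> _; rewrite addr0.
Qed.

Lemma Kcol (g : cfgF -> C)
  (hg : forall M, M \in S -> forall X, g X = ph M (fsub X M.1) * g (fsub X M.1))
  (x : cfgF) (e t : F) :
  \sum_(y : cfg (I :\ i)) Kr e (mk I x) y * g (Gx x (val y) t) = (e == t)%:R / #|F|%:R * g x.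
Proof.
set k := (#|F|%:R ^+ 2)^-1 : C.
have inner : forall c d, \sum_(y : cfg (I :\ i)) k * ((val (mk I x) == fadd (upd (val y) i e) (Mcd c d).1)%:R
     * ph (Mcd c d) (upd (val y) i e)) * g (Gx x (val y) t)
   = (c == x i - e)%:R * (k * ph (Mcd c d) (fsub x (Mcd c d).1) * g (upd (fsub x (Mcd c d).1) i t)).
  move=> c d.
  set M := Mcd c d; set y0 := mk (I :\ i) (fsub x M.1).
  transitivity (\sum_(y : cfg (I :\ i)) (val (mk I x) == fadd (upd (val y) i e) M.1)%:R *
                  (k * ph M (upd (val y) i e) * g (Gx x (val y) t))).
    by apply: eq_bigr => y _; rewrite mulrA [k * _]mulrC -!mulrA.
  rewrite (@sum_pick2 _ _ y0 (c == x i - e)); last by move=> y; rewrite cond_col.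
  have [hc|hc] := eqVneq c (x i - e); last by rewrite !mul0r.
  congr (_ * (_ * _ * g _)).
    apply: ph_supp; last by move=> j jI; case: (Mcd_out c d jI).
    move=> j jI; rewrite /y0 /= /upd /trunc /fsub !ffunE.
    have [->|ji] := eqVneq j i; first by rewrite hP1 hQ1 hc; ring.
    by rewrite in_setD1 ji jI.
  apply/ffunP => j; rewrite /Gx /y0 /= /upd /trunc /fsub !ffunE.
  case: eqP => // /eqP ji.
  rewrite in_setD1 ji /=; case: (boolP (j \in I)) => // jI.
  by case: (outI jI) => -> _ -> _; rewrite !mulr0 addr0 subr0.
rewrite /Kr.
transitivity (\sum_(c : F) \sum_(d : F) \sum_(y : cfg (I :\ i)) k * ((val (mk I x) == fadd (upd (val y) i e) (Mcd c d).1)%:R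
     * ph (Mcd c d) (upd (val y) i e)) * g (Gx x (val y) t)).
  transitivity (\sum_(y : cfg (I :\ i)) \sum_(c : F) \sum_(d : F) k * ((val (mk I x) == fadd (upd (val y) i e) (Mcd c d).1)%:R
     * ph (Mcd c d) (upd (val y) i e)) * g (Gx x (val y) t)).
    apply: eq_bigr => y _; rewrite mulr_suml; apply: eq_bigr => c _; exact: mulr_suml.
  rewrite exchange_big; apply: eq_bigr => c _; exact: exchange_big.
rewrite (eq_bigr (fun c => \sum_(d : F) (c == x i - e)%:R *
    (k * ph (Mcd c d) (fsub x (Mcd c d).1) * g (upd (fsub x (Mcd c d).1) i t)))); last first.
  by move=> c _; apply: eq_bigr => d _; apply: inner.
under eq_bigr do rewrite -mulr_sumr.
rewrite (@sum_pick _ _ (x i - e)) //.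
under eq_bigr do rewrite -mulrA.
rewrite -mulr_sumr (core hg) /k.
have qnz : (#|F|%:R : C) != 0 by rewrite pnatr_eq0 -lt0n; apply/card_gt0P; exists 0.
by field.
Qed.


Lemma ph_upd (M : cfgF * cfgF) (x : cfgF) (e : F) :
  ph M (upd x i e) = chi (M.2 i * e) * ph M (upd x i 0).
Proof.
rewrite /ph (bigD1 i) // [in RHS](bigD1 i) //= /upd !ffunE eqxx mulr0 chi0 // mul1r.
by congr (_ * _); apply: eq_bigr => j hj; rewrite !ffunE (negbTE hj).
Qed.

Lemma phC (M : cfgF * cfgF) (x : cfgF) : (ph M x)^* * ph M x = 1.
Proof. by rewrite /ph rmorph_prod -big_split /=; apply: big1 => j _; apply: chiC. Qed.

Lemma inner_e c d c' d' (u v : cfg (I :\ i)) (k : C) :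
  \sum_(e : F) k * ((fadd (upd (val u) i e) (Mcd c d).1 == fadd (upd (val v) i e) (Mcd c' d').1)%:R
     * ((ph (Mcd c d) (upd (val u) i e))^* * ph (Mcd c' d') (upd (val v) i e)))
  = (c' == c)%:R * ((d' == d)%:R * ((u == v)%:R * (k * #|F|%:R))).
Proof.
have u0 : val u i = 0 by apply: supp0; rewrite in_setD1 eqxx.
have v0 : val v i = 0 by apply: supp0; rewrite in_setD1 eqxx.
set kap := fadd (val u) (Mcd c d).1 == fadd (val v) (Mcd c' d').1.
have key : forall e, (fadd (upd (val u) i e) (Mcd c d).1 == fadd (upd (val v) i e) (Mcd c' d').1) = kap.
  move=> e; apply/eqP/eqP => h; apply/ffunP => j; have := congr1 (fun f : cfgF => f j) h;
    rewrite /fadd /upd !ffunE; case: eqP => // ->.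
    by rewrite u0 v0 !add0r; apply: addrI.
  by rewrite u0 v0 !add0r => ->.
set R0 := (ph (Mcd c d) (upd (val u) i 0))^* * ph (Mcd c' d') (upd (val v) i 0).
transitivity (\sum_(e : F) k * kap%:R * R0 * chi (e * (d' - d))).
  apply: eq_bigr => e _; rewrite key [ph (Mcd c d) _]ph_upd [ph (Mcd c' d') _]ph_upd !Mcd2i.
  rewrite conjM' chiCN //.
  have -> : chi (e * (d' - d)) = chi (- (d * e)) * chi (d' * e).
    by rewrite -chiD //; congr (chi _); ring.
  rewrite /R0; ring.
rewrite -mulr_sumr sum_chi // subr_eq0.
have [dd|nd] := eqVneq d' d; last by rewrite !mul0r !mulr0.
rewrite /R0 /kap; clear key R0 kap; subst d'.
set kap := fadd (val u) (Mcd c d).1 == fadd (val v) (Mcd c' d).1.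
have t1 : (true%:R : C) = 1 by [].
rewrite t1 !mul1r.
have [kp|nkp] := boolP kap; last first.
  rewrite mulr0 !mul0r.
  case: (eqVneq c' c) => [cc|]; last by rewrite mul0r.
  case: (eqVneq u v) => [uv|]; last by rewrite !mul0r mulr0.
  by move: nkp; rewrite /kap cc uv eqxx.
have cc : c' = c.
  by have := congr1 (fun f : cfgF => f i) (eqP kp); rewrite /fadd !ffunE u0 v0 !add0r hP1 hQ1 !mulr1 !mulr0 !addr0.
have uv : u = v.
  apply/val_inj/ffunP => j; have := congr1 (fun f : cfgF => f j) (eqP kp).
  by rewrite /fadd !ffunE cc => /addIr.
subst; rewrite !eqxx phC t1 !mul1r mulr1. by rewrite mulr1.
Qed.

Lemma A_supp e (u : cfg (I :\ i)) c d : supp_in I (fadd (upd (val u) i e) (Mcd c d).1).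
Proof.
apply/forallP => j; apply/implyP => jI.
have ji : j != i by apply: contraNneq jI => ->; exact: iI.
rewrite /fadd /upd !ffunE (negbTE ji) supp0 ?add0r; last by rewrite in_setD1 (negbTE jI) andbF.
by case: (outI jI) => -> _ -> _; rewrite !mulr0 addr0.
Qed.

Lemma Kcomp (u v : cfg (I :\ i)) :
  \sum_(e : F) \sum_(a : cfg I) (Kr e a u)^* * Kr e a v = (u == v)%:R / #|F|%:R.
Proof.
set k := (#|F|%:R ^+ 2)^-1 : C.
have kr : k^* = k by rewrite /k fmorphV rmorphXn rmorph_nat.
have step1 : forall e, \sum_(a : cfg I) (Kr e a u)^* * Kr e a v =
   \sum_(c : F) \sum_(d : F) \sum_(c' : F) \sum_(d' : F) (k * k) *
     ((fadd (upd (val u) i e) (Mcd c d).1 == fadd (upd (val v) i e) (Mcd c' d').1)%:R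
     * ((ph (Mcd c d) (upd (val u) i e))^* * ph (Mcd c' d') (upd (val v) i e))).
  move=> e; rewrite /Kr.
  transitivity (\sum_(a : cfg I) \sum_(c : F) \sum_(d : F) \sum_(c' : F) \sum_(d' : F)
     (k * ((val a == fadd (upd (val u) i e) (Mcd c d).1)%:R * ph (Mcd c d) (upd (val u) i e)))^* *
     (k * ((val a == fadd (upd (val v) i e) (Mcd c' d').1)%:R * ph (Mcd c' d') (upd (val v) i e)))).
    apply: eq_bigr => a _; rewrite rmorph_sum mulr_suml; apply: eq_bigr => c _.
    rewrite rmorph_sum mulr_suml; apply: eq_bigr => d _; rewrite mulr_sumr.
    by apply: eq_bigr => c' _; rewrite mulr_sumr.
  rewrite exchange_big; apply: eq_bigr => c _; rewrite exchange_big; apply: eq_bigr => d _.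
  rewrite exchange_big; apply: eq_bigr => c' _; rewrite exchange_big; apply: eq_bigr => d' _.
  set A := fadd (upd (val u) i e) (Mcd c d).1.
  set B := fadd (upd (val v) i e) (Mcd c' d').1.
  set f1 := ph (Mcd c d) (upd (val u) i e).
  set f2 := ph (Mcd c' d') (upd (val v) i e).
  pose a0 : cfg I := exist _ A (A_supp e u c d).
  transitivity (\sum_(a : cfg I) (val a == A)%:R * (k * k * ((val a == B)%:R * (f1^* * f2)))).
    apply: eq_bigr => a _; rewrite !conjM' kr conjC_nat; apply: rearr.
  by rewrite (@sum_pick _ _ a0).
rewrite (eq_bigr _ (fun e _ => step1 e)).
transitivity (\sum_(c : F) \sum_(d : F) \sum_(c' : F) \sum_(d' : F) \sum_(e : F) (k * k) *
     ((fadd (upd (val u) i e) (Mcd c d).1 == fadd (upd (val v) i e) (Mcd c' d').1)%:R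
     * ((ph (Mcd c d) (upd (val u) i e))^* * ph (Mcd c' d') (upd (val v) i e)))).
  rewrite exchange_big; apply: eq_bigr => c _; rewrite exchange_big; apply: eq_bigr => d _.
  rewrite exchange_big; apply: eq_bigr => c' _; exact: exchange_big.
transitivity (\sum_(c : F) \sum_(d : F) \sum_(c' : F) \sum_(d' : F)
    (c' == c)%:R * ((d' == d)%:R * ((u == v)%:R * ((k * k) * #|F|%:R)))).
  apply: eq_bigr => c _; apply: eq_bigr => d _; apply: eq_bigr => c' _.
  apply: eq_bigr => d' _; exact: (inner_e c d c' d' u v (k * k)).
transitivity (\sum_(c : F) \sum_(d : F) ((u == v)%:R * ((k * k) * #|F|%:R))).
  apply: eq_bigr => c _; apply: eq_bigr => d _.
  set X := (u == v)%:R * ((k * k) * #|F|%:R).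
  transitivity (\sum_(c' : F) (c' == c)%:R * \sum_(d' : F) (d' == d)%:R * X).
    by apply: eq_bigr => c' _; rewrite mulr_sumr.
  rewrite (@sum_pick C F c (fun c' => c' == c) (fun _ => \sum_(d' : F) (d' == d)%:R * X)) //.
  exact: (@sum_pick C F d (fun d' => d' == d) (fun _ => X)).
set Y := (u == v)%:R * ((k * k) * #|F|%:R).
rewrite (eq_bigr (fun _ => Y * #|F|%:R)); last first.
  by move=> c _; rewrite sumr_const -[Y *+ _]mulr_natr.
rewrite sumr_const -[(Y * #|F|%:R) *+ _]mulr_natr.
have qnz : (#|F|%:R : C) != 0 by rewrite pnatr_eq0 -lt0n; apply/card_gt0P; exists 0.
rewrite /Y /k.
have -> : #|(xpredT : pred F)| = #|F| by [].
by field.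
Qed.

Definition rhoF (rho : op F C [set: 'I_n]) (X Y : cfgF) : C := rho (mk setT X) (mk setT Y).

Lemma truncT (Y : cfgF) : trunc setT Y = Y.
Proof. by apply/ffunP => j; rewrite /trunc ffunE in_setT. Qed.

Lemma mkT (x : cfg setT) : mk setT (val x) = x.
Proof. by apply: val_inj; rewrite /= truncT. Qed.

Lemma rho_col rho : code_state p w S rho -> forall M, M \in S -> forall X Y,
  rhoF rho Y X = ph M (fsub Y M.1) * rhoF rho (fsub Y M.1) X.
Proof.
case=> _ _ _ hcode M hMS X Y.
have := hcode (fun z => (z == mk setT X)%:R) M hMS.
move/(congr1 (fun f => f (mk setT Y))); rewrite /applyop.
rewrite (@sum_pickr _ _ (mk setT X)) // /rhoF => <-.
transitivity (\sum_(z : cfg setT) (z == mk setT (fsub Y M.1))%:R * (ph M (val z) * rho z (mk setT X))).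
  apply: eq_bigr => z _; rewrite (@sum_pickr _ _ (mk setT X)) //.
  rewrite /pauli /= truncT.
  have -> : (Y == [ffun j => val z j + M.1 j]) = (z == mk setT (fsub Y M.1)).
    apply/eqP/eqP => [h|->]; first by apply: val_inj; rewrite /= truncT /fsub h; apply/ffunP => j; rewrite !ffunE addrK.
    by apply/ffunP => j; rewrite /= truncT /fsub !ffunE subrK.
  by case: eqP => _; rewrite ?mul1r ?mul0r.
by rewrite (@sum_pick _ _ (mk setT (fsub Y M.1))) //= truncT.
Qed.

Lemma rho_herm rho : code_state p w S rho -> forall X Y, rhoF rho Y X = (rhoF rho X Y)^*.
Proof. by case=> h _ _ _ X Y; rewrite /rhoF h. Qed.

Lemma Krow rho (hrho : code_state p w S rho) (x X : cfgF) (e t : F) :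
  \sum_(y : cfg (I :\ i)) (Kr e (mk I x) y)^* * rhoF rho X (Gx x (val y) t)
  = (e == t)%:R / #|F|%:R * rhoF rho X x.
Proof.
have hg : forall M, M \in S -> forall Z, rhoF rho Z X = ph M (fsub Z M.1) * rhoF rho (fsub Z M.1) X.
  by move=> M hMS Z; apply: rho_col.
have := Kcol hg x e t.
move/(congr1 (fun z => z^*)); rewrite rmorph_sum /= => h.
transitivity (\sum_(y : cfg (I :\ i)) (Kr e (mk I x) y * rhoF rho (Gx x (val y) t) X)^*).
  by apply: eq_bigr => y _; rewrite conjM' -rho_herm.
by rewrite h conjM' -rho_herm // conjM' conjC_nat conjV' conjC_nat.
Qed.

Definition zmk_f (t : F) : cfgF := [ffun j => if j == i then t else 0].
Lemma zmk_supp t : supp_in (~: [set~ i]) (zmk_f t).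
Proof.
apply/forallP => j; apply/implyP; rewrite !inE negbK => ji.
by rewrite /zmk_f ffunE (negbTE ji).
Qed.
Definition zmk (t : F) : cfg (~: [set~ i]) := exist _ (zmk_f t) (zmk_supp t).

Lemma sum_zz (f : F -> C) : \sum_(zz : cfg (~: [set~ i])) f (val zz i) = \sum_(t : F) f t.
Proof.
rewrite (reindex zmk) /=; last first.
  exists (fun zz : cfg (~: [set~ i]) => val zz i) => [t _|zz _]; first by rewrite /= /zmk_f ffunE eqxx.
  apply: val_inj; apply/ffunP => j; rewrite /= /zmk_f ffunE.
  case: eqP => [->//|/eqP ji]; symmetry; apply: supp0; rewrite !inE negbK; exact: ji.
by apply: eq_bigr => t _; rewrite /zmk_f ffunE eqxx.
Qed.

Lemma G1 (y : cfg (I :\ i)) (X : cfgF) (zz : cfg (~: [set~ i])) :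
  glue [set~ i] (val (mk [set~ i] (glue (I :\ i) (val y) X))) (val zz) = Gx X (val y) (val zz i).
Proof.
apply/ffunP => j; rewrite /glue /Gx /= /trunc !ffunE !inE.
case: eqP => [->|/eqP ji] //=.
Qed.

Definition Klist : seq (cfg I -> cfg (I :\ i) -> C) := [seq Kr ef.1 | ef <- enum {: F * F}].

Definition PhiK (tau : cfg (I :\ i) -> cfg (I :\ i) -> C) : cfg I -> cfg I -> C :=
  fun a a' => \sum_(k <- Klist) \sum_(u : cfg (I :\ i)) \sum_(v : cfg (I :\ i)) k a u * tau u v * (k a' v)^*.

Lemma sumK (G : (cfg I -> cfg (I :\ i) -> C) -> C) :
  \sum_(k <- Klist) G k = #|F|%:R * \sum_(e : F) G (Kr e).
Proof.
rewrite big_map big_enum /=.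
transitivity (\sum_(ef : F * F) G (Kr ef.1)); first by apply: eq_bigl => ef.
rewrite -(pair_bigA _ (fun e (f : F) => G (Kr e))) /= mulr_sumr.
apply: eq_bigr => e _; rewrite sumr_const mulr_natl.
by [].
Qed.

Lemma PhiE (a a' : cfg I) (y y' : cfg (I :\ i)) : PhiK (Emat C y y') a a' = #|F|%:R * \sum_(e : F) Kr e a y * (Kr e a' y')^*.
Proof.
rewrite /PhiK sumK; congr (_ * _); apply: eq_bigr => e _.
transitivity (\sum_(u : cfg (I :\ i)) (u == y)%:R * (Kr e a u * (Kr e a' y')^*)).
  apply: eq_bigr => u _.
  transitivity (\sum_(v : cfg (I :\ i)) ((u == y) && (v == y'))%:R * (Kr e a u * (Kr e a' v)^*)).
    by apply: eq_bigr => v _; rewrite /Emat mulrAC mulrC.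
  by rewrite (@sum_pick2 _ _ y' (u == y)).
by rewrite (@sum_pick _ _ y).
Qed.

Lemma recover rho (hrho : code_state p w S rho) (x x' : cfg setT) :
  @ext_id F C n (I :\ i) I [set~ i] setT PhiK (@ptr F C n setT [set~ i] rho) x x' = rho x x'.
Proof.
rewrite /ext_id.
set X := val x; set X' := val x'.
have qnz : (#|F|%:R : C) != 0 by rewrite pnatr_eq0 -lt0n; apply/card_gt0P; exists 0.
transitivity (\sum_(y : cfg (I :\ i)) \sum_(y' : cfg (I :\ i))
   (#|F|%:R * \sum_(e : F) Kr e (mk I X) y * (Kr e (mk I X') y')^*) *
   \sum_(zz : cfg (~: [set~ i])) rhoF rho (Gx X (val y) (val zz i)) (Gx X' (val y') (val zz i))).
  apply: eq_bigr => y _; apply: eq_bigr => y' _; rewrite PhiE; congr (_ * _).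
  by rewrite /ptr; apply: eq_bigr => zz _; rewrite /rhoF !G1.
rewrite (reorg _ (fun e y => Kr e (mk I X) y) (fun e y' => (Kr e (mk I X') y')^*)
  (fun y y' (zz : cfg (~: [set~ i])) => rhoF rho (Gx X (val y) (val zz i)) (Gx X' (val y') (val zz i)))).
transitivity (\sum_(zz : cfg (~: [set~ i])) \sum_(e : F) #|F|%:R *
   ((e == val zz i)%:R / #|F|%:R * ((e == val zz i)%:R / #|F|%:R * rhoF rho X X'))).
  apply: eq_bigr => zz _; apply: eq_bigr => e _; congr (_ * _).
  set t := val zz i.
  transitivity (\sum_(y : cfg (I :\ i)) Kr e (mk I X) y * ((e == t)%:R / #|F|%:R * rhoF rho (Gx X (val y) t) X')).
    by apply: eq_bigr => y _; congr (_ * _); apply: Krow.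
  under eq_bigr do rewrite mulrCA.
  rewrite -mulr_sumr; congr (_ * _).
  have hg : forall M, M \in S -> forall Z, rhoF rho Z X' = ph M (fsub Z M.1) * rhoF rho (fsub Z M.1) X'.
    by move=> M hMS Z; apply: rho_col.
  exact: (Kcol hg X e t).
have bb : forall b : bool, (b%:R : C) * b%:R = b%:R by case; rewrite ?mulr1 ?mulr0.
transitivity (\sum_(zz : cfg (~: [set~ i])) \sum_(e : F) (e == val zz i)%:R * (rhoF rho X X' / #|F|%:R)).
  apply: eq_bigr => zz _; apply: eq_bigr => e _.
  rewrite -[in RHS]bb; field; exact: qnz.
transitivity (\sum_(zz : cfg (~: [set~ i])) (rhoF rho X X' / #|F|%:R)).
  apply: eq_bigr => zz _.
  exact: (@sum_pick C F (val zz i) (fun e => e == val zz i) (fun _ => rhoF rho X X' / #|F|%:R)).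
transitivity (\sum_(t : F) (rhoF rho X X' / #|F|%:R)).
  exact: (sum_zz (fun _ => rhoF rho X X' / #|F|%:R)).
rewrite sumr_const -[(_ / _) *+ _]mulr_natr.
have -> : #|(xpredT : pred F)| = #|F| by [].
rewrite /rhoF /X /X' !mkT.
by field.
Qed.
End Main.

Unset Implicit Arguments.

Theorem proposition2p19 (F : finFieldType) (C : numClosedFieldType) (p : nat) (w : C)
    (n r : nat) (S : {set {ffun 'I_n -> F} * {ffun 'I_n -> F}}) :
  p \in [pchar F] ->
  p.-primitive_root w ->
  stabilizer_group p w S ->
  (forall i : 'I_n, exists P Q, [/\ P \in S, Q \in S,
      (#|psupp P :|: psupp Q| <= r)%N,
      (P.1 i, P.2 i) = (1, 0) & (Q.1 i, Q.2 i) = (0, 1)]) ->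
  locally_recoverable p w S r.
Proof.
move=> chp wp [h0 hadd hscale hcomm] hloc i.
have [P [Q [hP hQ hsz hPi hQi]]] := hloc i.
case: hPi => hP1 hP2; case: hQi => hQ1 hQ2.
have hM : forall c d, Mcd P Q c d \in S.
  move=> c d; have h1 := hscale c P hP; have h2 := hscale d Q hQ.
  have := hadd _ _ h1 h2.
  suff -> : Mcd P Q c d = ([ffun j => [ffun j0 => c * P.1 j0] j + [ffun j0 => d * Q.1 j0] j],
                         [ffun j => [ffun j0 => c * P.2 j0] j + [ffun j0 => d * Q.2 j0] j]) by [].
  by rewrite /Mcd; congr pair; apply/ffunP => j; rewrite !ffunE.
exists (psupp P :|: psupp Q); split.
- by rewrite !inE hP1 oner_eq0.
- exact: hsz.
exists (@PhiK F C p w n i P Q); split.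
  exists (@Klist F C p w n i P Q); split; first by [].
  move=> u v.
  rewrite (@sumK F C p w n i P Q (fun k => \sum_(x : {x : {ffun 'I_n -> F} | supp_in (psupp P :|: psupp Q) x}) (k x u)^* * k x v)).
  rewrite (Kcomp chp wp hP1 hP2 hQ1 hQ2).
  have qnz : (#|F|%:R : C) != 0 by rewrite pnatr_eq0 -lt0n; apply/card_gt0P; exists 0.
  by field.
move=> rho hrho.
apply: functional_extensionality => x; apply: functional_extensionality => x'.
exact: (recover chp wp hP1 hP2 hQ1 hQ2 hM hrho).
Qed.
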